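(* Let $n\geq 2$ and $q=p^h$ with $p$ prime and $h\geq 1$. The minimum weight of the code $C\cap C^\perp$, where $C=C(PG(n,q))$, is equal to $2q^{n-1}$. This weight is attained by $H_1-H_2$, the difference of the incidence vectors of two distinct hyperplanes $H_1,H_2$ of $PG(n,q)$.
   Context: $PG(n,q)$ is the Desarguesian $n$-dimensional projective space over $\mathbb{F}_q$. The code $C=C(PG(n,q))$ is the $\mathbb{F}_p$-linear span, inside $\mathbb{F}_p^{\theta_n}$ with $\theta_n=(q^{n+1}-1)/(q-1)$, of the rows of the incidence matrix whose rows are indexed by the hyperplanes and whose columns are indexed by the points of $PG(n,q)$. A row has entry $1$ if the point lies in the hyperplane and $0$ otherwise. $C^\perp$ is its dual with respect to the standard scalar product over $\mathbb{F}_p$. The weight of a vector is the size of its support, the set of nonzero coordinates, which is identified with a set of points. *)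

(* Defs.v *)
From HB Require Import structures.
From mathcomp Require Import all_boot all_order all_algebra all_field.
Set Implicit Arguments. Unset Strict Implicit. Unset Printing Implicit Defensive.
Import GRing.Theory.
Local Open Scope ring_scope.

(* PG(n,F): points are the 1-dimensional subspaces of F^(n+1), represented
   as the set of vectors {a v | a in F} for a nonzero v. *)
Definition is_point (F : finFieldType) (n : nat) (S : {set 'rV[F]_n.+1}) : bool :=
  [exists v : 'rV[F]_n.+1, (v != 0) && (S == [set a *: v | a : F])].

Notation point F n := {S : {set 'rV[F]_n.+1} | is_point S}.

Definition incident (F : finFieldType) (n : nat) (P : point F n) (u : 'rV[F]_n.+1) : bool :=
  [forall v in val P, (v *m u^T) == 0].

Definition hyp_of (F : finFieldType) (n : nat) (u : 'rV[F]_n.+1) : {set point F n} :=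
  [set P | incident P u].

Definition is_hyp (F : finFieldType) (n : nat) (H : {set point F n}) : bool :=
  [exists u : 'rV[F]_n.+1, (u != 0) && (H == hyp_of u)].

Notation hyperplane F n := {H : {set point F n} | is_hyp H}.

Notation word p F n := {ffun point F n -> 'F_p}.

Definition incvec (p : nat) (F : finFieldType) (n : nat) (H : {set point F n}) : word p F n :=
  [ffun P => (P \in H)%:R].

Definition in_code (p : nat) (F : finFieldType) (n : nat) (c : word p F n) : Prop :=
  exists lam : {ffun hyperplane F n -> 'F_p},
    c = [ffun P => \sum_(H : hyperplane F n) lam H * incvec p (val H) P].

Definition dotw (p : nat) (F : finFieldType) (n : nat) (c d : word p F n) : 'F_p :=
  \sum_(P : point F n) c P * d P.

Definition in_dual (p : nat) (F : finFieldType) (n : nat) (c : word p F n) : Prop :=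
  forall d : word p F n, in_code d -> dotw c d = 0.

Definition weight (p : nat) (F : finFieldType) (n : nat) (c : word p F n) : nat :=
  #|[set P | c P != 0]|.

(* Main.v *)
Require Import Defs.
From HB Require Import structures.
From mathcomp Require Import all_boot all_order all_algebra all_field.
Import GRing.Theory.
Local Open Scope ring_scope.
From mathcomp Require Import all_character.
From mathcomp Require Import zify ring.
From Stdlib Require Import Classical.

Module Aux.
Set Implicit Arguments. Unset Strict Implicit. Unset Printing Implicit Defensive.

Lemma max_exists (P : nat -> Prop) m r0 : (forall r, P r -> (r <= m)%N) -> P r0 ->
  exists r, P r /\ forall r', P r' -> (r' <= r)%N.
Proof.
move=> ub; move: (leqnn (m - r0)); move: {2}(m - r0)%N => d.
elim: d r0 => [|d IH] r0 hd Pr0.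
  exists r0; split => // r' Pr'; have := ub r' Pr'; have := ub r0 Pr0; lia.
case: (classic (exists r', P r' /\ (r0 < r')%N)) => [[r' [Pr' lt]] | no].
  by apply: (IH r') => //; have := ub r' Pr'; lia.
exists r0; split => // r' Pr'; rewrite leqNgt; apply/negP => lt; apply: no.
by exists r'.
Qed.

Section CoreS.
Variables (F : finFieldType) (k : nat).
Local Notation q := #|F|.
Local Notation Q := (#|F|.-1).
Local Notation V := 'rV[F]_k.

Definition dot (x u : V) : F := (x *m u^T) 0 0.

Lemma dotD x y u : dot (x + y) u = dot x u + dot y u.
Proof. by rewrite /dot mulmxDl mxE. Qed.
Lemma dotZ a x u : dot (a *: x) u = a * dot x u.
Proof. by rewrite /dot -scalemxAl mxE. Qed.
Lemma dot0 u : dot 0 u = 0.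
Proof. by rewrite /dot mul0mx mxE. Qed.

Lemma q_gt1 : (1 < q)%N.
Proof. exact: finNzRing_gt1. Qed.
Lemma qE : q = Q.+1.
Proof. by have := q_gt1; case: #|F|. Qed.
Lemma Q_gt0 : (0 < Q)%N.
Proof. by have := q_gt1; case: #|F| => // -[]. Qed.

Lemma fermat (a : F) : a != 0 -> a ^+ Q = 1.
Proof.
move=> a0; have := expf_card a; rewrite qE exprS => H.
by apply: (mulfI a0); rewrite mulr1.
Qed.
Lemma zeroQ : (0 : F) ^+ Q = 0.
Proof. by rewrite expr0n; case: Q Q_gt0. Qed.

Variables (I : finType) (mu : I -> F) (w : I -> V).
Definition G (x : V) : F := \sum_i mu i * dot x (w i) ^+ Q.

Lemma G0 : G 0 = 0.
Proof. by rewrite /G big1 // => i _; rewrite dot0 zeroQ mulr0. Qed.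

Lemma GZ (a : F) x : a != 0 -> G (a *: x) = G x.
Proof.
move=> a0; apply: eq_bigr => i _; by rewrite dotZ exprMn (fermat a0) mul1r.
Qed.


Lemma sumb_card (T : finType) (b : pred T) : (\sum_t (b t : nat))%N = #|b|.
Proof. by rewrite -sum1_card [RHS]big_mkcond /=; apply: eq_bigr => t _; rewrite unfold_in; case: (b t). Qed.

Definition Fj (w0 : V) (j : nat) (x : V) : F :=
  \sum_i mu i * ((dot w0 (w i) ^+ (Q - j) * dot x (w i) ^+ j) *+ 'C(Q, j)).

Lemma expand w0 x : G (w0 + x) = \sum_(j < Q.+1) Fj w0 j x.
Proof.
rewrite /G /Fj; under eq_bigr do rewrite dotD exprDn mulr_sumr.
by rewrite exchange_big.
Qed.

Lemma FjQ w0 x : Fj w0 Q x = G x.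
Proof. apply: eq_bigr => i _; by rewrite subnn expr0 mul1r binn mulr1n. Qed.

Definition Lp (x y : V) i : {poly F} := (dot x (w i))%:P + dot y (w i) *: 'X.
Definition Pj w0 j (x y : V) : {poly F} :=
  \sum_i (mu i * (dot w0 (w i) ^+ (Q - j) *+ 'C(Q, j))) *: Lp x y i ^+ j.

Lemma Pj_eval w0 j x y t : (Pj w0 j x y).[t] = Fj w0 j (x + t *: y).
Proof.
rewrite /Pj /Fj horner_sum; apply: eq_bigr => i _.
rewrite hornerZ horner_exp /Lp hornerD hornerC hornerZ hornerX dotD dotZ.
by rewrite -mulrA mulrnAl [t * _]mulrC.
Qed.

Lemma size_Lp_exp x y i j : (size (Lp x y i ^+ j) <= j.+1)%N.
Proof.
apply: leq_trans (size_poly_exp_leq _ _) _; rewrite ltnS.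
have : (size (Lp x y i) <= 2)%N.
  apply: leq_trans (size_polyD _ _) _; rewrite geq_max.
  rewrite (leq_trans (size_polyC_leq1 _)) //.
  by rewrite (leq_trans (size_scale_leq _ _)) // size_polyX.
by case: (size _) => [|[|[|]]] //= _; rewrite ?mul0n ?mul1n.
Qed.

Lemma coef_Lp_exp x y i j : (Lp x y i ^+ j)`_j = dot y (w i) ^+ j.
Proof.
elim: j => [|j IH]; first by rewrite !expr0 coefC.
rewrite exprSr {2}/Lp mulrDr coefD coefMC -scalerAr coefZ coefMX /= IH.
by rewrite (nth_default _ (size_Lp_exp _ _ _ _)) mul0r add0r exprSr mulrC.
Qed.

Lemma size_Pj w0 j x y : (size (Pj w0 j x y) <= j.+1)%N.
Proof.
rewrite /Pj; apply: leq_trans (size_sum _ _ _) _; apply/bigmax_leqP => i _.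
exact: leq_trans (size_scale_leq _ _) (size_Lp_exp _ _ _ _).
Qed.

Lemma coef_Pj w0 j x y : (Pj w0 j x y)`_j = Fj w0 j y.
Proof.
rewrite /Pj /Fj coef_sum; apply: eq_bigr => i _.
by rewrite coefZ coef_Lp_exp -mulrA mulrnAl.
Qed.

Lemma reindexU (U : {vspace V}) (z : V) (g : V -> nat) : z \in U ->
  (\sum_(x in U) g (x + z)%R)%N = (\sum_(x in U) g x)%N.
Proof.
move=> zU; rewrite [RHS](reindex_inj (addIr z)) /=.
by apply: eq_bigl => x; rewrite rpredDr.
Qed.

Lemma reindexC (U : {vspace V}) (z : V) (g : V -> nat) : z \in U ->
  (\sum_(x | x \notin U) g (x + z)%R)%N = (\sum_(x | x \notin U) g x)%N.
Proof.
move=> zU; rewrite [RHS](reindex_inj (addIr z)) /=.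
by apply: eq_bigl => x; rewrite rpredDr.
Qed.

Lemma affine_bound (U : {vspace V}) (w0 : V) :
  (forall x, x \in U -> G x = 0) -> (exists2 x, x \in U & G (w0 + x) != 0) ->
  (2 * #|U| <= q * \sum_(x in U) (G (w0 + x)%R != 0%R : nat))%N.
Proof.
move=> GU [x0 x0U nz].
pose P j := (j < Q.+1)%N && [exists x, (x \in U) && (Fj w0 j x != 0)].
have exP : exists j, P j.
  case: (pickP (fun j : 'I_Q.+1 => Fj w0 j x0 != 0)) => [j nzj | all0].
    exists j; rewrite /P ltn_ord; apply/existsP; exists x0; by rewrite x0U nzj.
  by move: nz; rewrite expand big1 ?eqxx // => j _; have /negbFE/eqP := all0 j.
have ubP : forall j, P j -> (j <= Q)%N by move=> j /andP[].
case: (ex_maxnP exP ubP) => d Pd maxd.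
have dltQ : (d < Q)%N.
  rewrite ltn_neqAle ubP // andbT; apply/eqP => dQ.
  move: Pd; rewrite /P dQ => /andP[_ /existsP[x /andP[xU]]].
  by rewrite FjQ GU // eqxx.
move: (Pd) => /andP[dQ1 /existsP[y /andP[yU nzy]]].
have Pj0 : forall j x, (d < j)%N -> (j < Q.+1)%N -> x \in U -> Pj w0 j x y = 0.
  move=> j x dj jQ xU; apply/eqP; apply: contraT => nzP.
  have : (size (enum F) < size (Pj w0 j x y))%N.
    apply: max_poly_roots nzP _ (enum_uniq _).
    apply/allP => t _; rewrite /root Pj_eval; apply/eqP/eqP; apply: contraT => nzF.
    have : P j.
      rewrite /P jQ; apply/existsP; exists (x + t *: y).
      by rewrite memvD ?memvZ // nzF.
    by move/maxd; rewrite leqNgt dj.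
  rewrite -cardT qE => /leq_trans/(_ (size_Pj _ _ _ _)).
  by rewrite ltnS leqNgt jQ.
have line2 : forall x, x \in U -> (2 <= \sum_t (G (w0 + (x + t *: y))%R != 0%R : nat))%N.
  move=> x xU; pose px := \sum_(j < Q.+1) Pj w0 j x y.
  have pxE : forall t, px.[t] = G (w0 + (x + t *: y)).
    by move=> t; rewrite horner_sum expand; apply: eq_bigr => j _; rewrite Pj_eval.
  have coefd : px`_d = Fj w0 d y.
    rewrite coef_sum (bigD1 (Ordinal dQ1)) //= coef_Pj big1 ?addr0 // => j ne.
    case: (ltngtP j d) => [jd | dj | jd].
    - by rewrite nth_default // (leq_trans (size_Pj _ _ _ _)).
    - by rewrite Pj0 ?coef0.
    - by move: ne; rewrite -val_eqE /= jd eqxx.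
  have szpx : (size px <= d.+1)%N.
    apply: leq_trans (size_sum _ _ _) _; apply/bigmax_leqP => j _.
    case: (leqP j d) => [jd | dj].
      by rewrite (leq_trans (size_Pj _ _ _ _)).
    by rewrite Pj0 ?size_poly0.
  have px0 : px != 0 by apply: contra nzy => /eqP px0; rewrite -coefd px0 coef0.
  have roots : (#|[pred t | root px t]| < d.+1)%N.
    rewrite cardE; apply: leq_trans szpx.
    apply: max_poly_roots px0 _ (enum_uniq _).
    by apply/allP => t; rewrite mem_enum.
  have := cardC [pred t | root px t].
  rewrite -(sumb_card [predC [pred t | root px t]]) => cE.
  have -> : (\sum_t (G (w0 + (x + t *: y))%R != 0%R : nat))%N =
            (\sum_t ([predC [pred t | root px t]] t : nat))%N.
    by apply: eq_bigr => t _; rewrite /= inE /root pxE.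
  have : (#|F| = #|[pred t | root px t]| + \sum_t ([predC [pred t | root px t]] t : nat))%N
    by rewrite cE.
  rewrite qE; move: Q_gt0 dltQ roots; lia.
have : (\sum_(x in U) 2 <= \sum_(x in U) \sum_t (G (w0 + (x + t *: y))%R != 0%R : nat))%N.
  by apply: leq_sum => x xU; apply: line2.
rewrite exchange_big /= sum_nat_const mulnC.
have -> : (\sum_(t : F) \sum_(x in U) (G (w0 + (x + t *: y))%R != 0%R : nat) =
   \sum_(t : F) \sum_(x in U) (G (w0 + x)%R != 0%R : nat))%N.
  apply: eq_bigr => t _.
  rewrite -(reindexU (fun x => (G (w0 + x)%R != 0%R : nat)) (memvZ t yU)) //.
by rewrite sum_nat_const cardT -cardE.
Qed.

Lemma dim_lt (U : {vspace V}) v : v \notin U -> (\dim U < \dim (U + <[v]>)%VS)%N.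
Proof.
move=> vU; have [le e] := dimv_leqif_sup (addvSl U <[v]>).
rewrite ltn_neqAle le andbT e; apply: contra vU => sub.
by rewrite memvE (subv_trans (addvSr U <[v]>) sub).
Qed.

Lemma dim_le (U : {vspace V}) : (\dim U <= k)%N.
Proof. by apply: leq_trans (dimvS (subvf U)) _; rewrite dimvf /= /dim /= mul1n. Qed.

Theorem core (hk : (2 <= k)%N) (nz : exists v, G v != 0) :
  (2 * Q * q ^ (k - 2) <= #|[set v | G v != 0%R]|)%N.
Proof.
pose PU r := exists U : {vspace V}, \dim U = r /\ (forall x, x \in U -> G x = 0).
have [r [[U [dimU GU]] maxU]] : exists r, PU r /\ forall r', PU r' -> (r' <= r)%N.
  apply: (@max_exists _ k 0).
    by move=> r [U' [<- _]]; apply: dim_le.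
  exists 0%VS; split; first exact: dimv0.
  by move=> x; rewrite memv0 => /eqP ->; exact: G0.
have ext : forall v, v \notin U -> exists2 x, x \in U & G (v + x) != 0.
  move=> v vU.
  have notP : ~ PU (\dim (U + <[v]>)%VS).
    by move=> /maxU; rewrite leqNgt -dimU dim_lt.
  have [z zUv Gz] : exists2 z, z \in (U + <[v]>)%VS & G z != 0.
    apply: NNPP => H; apply: notP; exists (U + <[v]>)%VS; split => // x xU.
    by apply/eqP; apply: contraT => Gx; exfalso; apply: H; exists x.
  move/memv_addP: zUv => [u uU [z2 /vlineP[a ->] zE]].
  have a0 : a != 0.
    by apply: contra Gz => /eqP a0'; rewrite zE a0' scale0r addr0 GU.
  exists (a^-1 *: u); first by rewrite memvZ.
  by rewrite -(GZ (v + _) a0) scalerDr scalerA mulfV // scale1r addrC -zE.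
have rk : (r < k)%N.
  case: nz => v Gv; have vU : v \notin U by apply: contra Gv => vU; rewrite GU.
  by rewrite -dimU; apply: leq_trans (dim_lt vU) (dim_le _).
have ZE : #|[set v | G v != 0%R]| = (\sum_(v | v \notin U) (G v != 0%R : nat))%N.
  have -> : #|[set v | G v != 0%R]| = #|[pred v | G v != 0%R]|.
    by apply: eq_card => v; rewrite inE.
  rewrite -sumb_card (bigID (fun v => v \in U)) /= big1 ?add0n //.
  by move=> v vU; rewrite GU ?eqxx.
pose Z := (\sum_(v | v \notin U) (G v != 0%R : nat))%N.
have cU : #|U| = (q ^ r)%N by rewrite card_vspace dimU.
have key : (#|U| * Z = \sum_(v | v \notin U) \sum_(u in U) (G (v + u)%R != 0%R : nat))%N.
  rewrite exchange_big /= -sum_nat_const /Z; apply: eq_bigr => u uU.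
  by rewrite (reindexC (fun v => (G v != 0%R : nat)) uU).
have cnotU : #|[predC U]| = (q ^ k - q ^ r)%N.
  by have := cardC U; rewrite card_mx mul1n cU => <-; rewrite addKn.
have ineq : (#|[predC U]| * (2 * #|U|) <= q * (#|U| * Z))%N.
  rewrite key big_distrr /= -sum_nat_const.
  apply: leq_sum => v vU; apply: affine_bound => //; exact: ext.
rewrite ZE -/Z.
move: ineq; rewrite cnotU cU.
have qpos : (0 < q)%N by rewrite qE.
have qr : (0 < q ^ r)%N by rewrite expn_gt0 qpos.
have e1 : (q ^ k = q * (q * q ^ (k - 2)))%N by rewrite -!expnS -add2n subnKC.
have e2 : (q ^ r <= q * q ^ (k - 2))%N.
  by rewrite -expnS leq_exp2l ?q_gt1 //; lia.
move: e1 e2 qr; rewrite qE /=.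
set A := (_ ^ (k - 2))%N; set B := (_ ^ r)%N; set C := (_ ^ k)%N.
move=> e1 e2 qr h0.
have h1 : ((C - B) * 2 <= Q.+1 * Z)%N.
  rewrite -(leq_pmul2l qr); move: h0.
  by rewrite [(B * ((C - B) * 2))%N]mulnC -mulnA [X in (_ <= X)%N]mulnCA.
rewrite -(leq_pmul2l (ltn0Sn Q)); apply: leq_trans h1; rewrite e1.
move: e2; set X := (Q.+1 * A)%N => e2.
have -> : (Q.+1 * (2 * Q * A) = 2 * (Q * X))%N by rewrite /X; ring.
rewrite [(Q.+1 * X)%N]mulSn; lia.
Qed.

End CoreS.


Section PG.
Variables (F : finFieldType) (n : nat).
Local Notation q := #|F|.
Local Notation Q := (#|F|.-1).
Local Notation V := 'rV[F]_n.+1.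

Definition pts (v : V) : {set V} := [set a *: v | a : F].

Lemma pts_point (v : V) : v != 0 -> is_point (pts v).
Proof. by move=> v0; apply/existsP; exists v; rewrite v0 eqxx. Qed.

Definition u1 : V := const_mx 1.
Lemma u1_neq0 : u1 != 0.
Proof. by apply/eqP => /matrixP /(_ 0 0); rewrite !mxE; apply/eqP; exact: oner_neq0. Qed.

Definition Pdef : point F n := exist _ (pts u1) (pts_point u1_neq0).
Definition ptp (v : V) : point F n := insubd Pdef (pts v).

Lemma val_ptp v : v != 0 -> val (ptp v) = pts v.
Proof. by move=> v0; rewrite val_insubd pts_point. Qed.

Lemma mem_pts (x v : V) : reflect (exists a, x = a *: v) (x \in pts v).
Proof.
apply: (iffP imsetP) => [[a _ ->] | [a ->]]; first by exists a.
by exists a.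
Qed.

Lemma ptsZ (v : V) (a : F) : a != 0 -> pts (a *: v) = pts v.
Proof.
move=> a0; apply/setP => x; apply/mem_pts/mem_pts => [[b ->] | [b ->]].
  by exists (b * a); rewrite scalerA.
by exists (b / a); rewrite scalerA mulfVK.
Qed.

Lemma point_rep (P : point F n) : exists2 v : V, v != 0 & val P = pts v.
Proof. by case/existsP: (valP P) => v /andP[v0 /eqP ->]; exists v. Qed.

Lemma ptp_eq (v : V) (P : point F n) : v != 0 -> (ptp v == P) = (v \in val P).
Proof.
move=> v0; have [w w0 Pw] := point_rep P.
apply/eqP/idP => [<- | ].
  by rewrite val_ptp //; apply/mem_pts; exists 1; rewrite scale1r.
rewrite Pw => /mem_pts [a va]; apply: val_inj; rewrite val_ptp // Pw va ptsZ //.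
by apply: contra v0 => /eqP a0; rewrite va a0 scale0r.
Qed.

Lemma card_pts (v : V) : v != 0 -> #|pts v| = q.
Proof.
move=> v0; rewrite /pts card_imset //.
by move=> a b /eqP; rewrite -subr_eq0 -scalerBl scaler_eq0 (negbTE v0) orbF subr_eq0 => /eqP.
Qed.

Lemma card_fiber (P : point F n) : #|[pred v : V | (v != 0) && (ptp v == P)]| = Q.
Proof.
have [w w0 Pw] := point_rep P.
have e : [pred v : V | (v != 0) && (ptp v == P)] =i val P :\ 0.
  move=> v; rewrite !inE; case: (eqVneq v 0) => [->|v0] //=.
  by rewrite ptp_eq.
rewrite (eq_card e).
have := cardsD1 0 (val P); rewrite Pw card_pts //.
have -> : (0 : V) \in pts w by apply/mem_pts; exists 0; rewrite scale0r.
by move=> ->.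
Qed.

Lemma partitionF (g : point F n -> F) :
  \sum_(v : V | v != 0) g (ptp v) = (\sum_P g P) *+ Q.
Proof.
rewrite (partition_big ptp predT) //= -sumrMnl; apply: eq_bigr => P _.
rewrite (eq_bigr (fun _ => g P)); last by move=> v /andP[_ /eqP ->].
by rewrite sumr_const card_fiber.
Qed.

Lemma partitionN (g : point F n -> nat) :
  (\sum_(v : V | v != 0%R) g (ptp v) = (\sum_P g P) * Q)%N.
Proof.
rewrite (partition_big ptp predT) //= big_distrl; apply: eq_bigr => P _.
rewrite (eq_bigr (fun _ => g P)); last by move=> v /andP[_ /eqP ->].
by rewrite sum_nat_const card_fiber mulnC.
Qed.

Lemma mx11_eq0 (A : 'M[F]_1) : (A == 0) = (A 0 0 == 0).
Proof.
apply/eqP/eqP => [-> | h]; first by rewrite mxE.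
by apply/matrixP => i j; rewrite !ord1 h mxE.
Qed.

Lemma inc_ptp (v u : V) : v != 0 -> (ptp v \in hyp_of u) = (dot v u == 0).
Proof.
move=> v0; rewrite /hyp_of inE /incident val_ptp //.
apply/forallP/idP => [h | h x].
  move: (h v) => /implyP; rewrite mx11_eq0 /dot; apply; apply/mem_pts; exists 1.
  by rewrite scale1r.
apply/implyP => /mem_pts [a ->]; rewrite -scalemxAl.
by rewrite mx11_eq0 mxE -/(dot v u) (eqP h) mulr0.
Qed.

Lemma ind_pow (x : F) : (x == 0)%:R = 1 - x ^+ Q.
Proof.
case: (eqVneq x 0) => [->|x0]; first by rewrite zeroQ subr0.
by rewrite fermat // subrr.
Qed.

Variables (p : nat) (hp : prime p) (hc : p \in [pchar F]).

Definition iota (x : 'F_p) : F := (x : nat)%:R.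

Lemma valFpD (x y : 'F_p) : ((x + y)%R : nat) = ((x + y) %% p)%N.
Proof. exact: (congr1 (modn _) (Fp_cast hp)). Qed.
Lemma valFpM (x y : 'F_p) : ((x * y)%R : nat) = ((x * y) %% p)%N.
Proof. exact: (congr1 (modn _) (Fp_cast hp)). Qed.

Lemma iotaD x y : iota (x + y) = iota x + iota y.
Proof. by rewrite /iota valFpD GRing.natr_mod_pchar // natrD. Qed.
Lemma iotaM x y : iota (x * y) = iota x * iota y.
Proof. by rewrite /iota valFpM GRing.natr_mod_pchar // natrM. Qed.
Lemma iota0 : iota 0 = 0.
Proof. by []. Qed.
Lemma iota1 : iota 1 = 1.
Proof. by rewrite /iota /= Fp_cast // GRing.natr_mod_pchar. Qed.
Lemma iota_sum (I : finType) (f : I -> 'F_p) : iota (\sum_i f i) = \sum_i iota (f i).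
Proof. exact: (big_morph iota iotaD iota0). Qed.
Lemma iota_nat (b : bool) : iota (b%:R) = b%:R.
Proof. by case: b; rewrite ?iota1 ?iota0. Qed.
Lemma iota_eq0 x : (iota x == 0) = (x == 0).
Proof.
rewrite /iota -(dvdn_pcharf hc); apply/idP/eqP => [d | ->]; last by rewrite dvdn0.
have lt : ((x : nat) < p)%N := leq_trans (ltn_ord x) (eq_leq (Fp_cast hp)).
apply: val_inj => /=; apply/eqP; move: d; apply: contraTT => nz.
by rewrite gtnNdvd ?lt0n.
Qed.
Lemma iota_inj : injective iota.
Proof.
move=> x y e; apply/eqP; rewrite -subr_eq0 -iota_eq0.
have : iota (x - y + y) = iota x by rewrite subrK.
by rewrite iotaD e -{2}[iota y]add0r => /addIr ->.
Qed.

Variables (h : nat) (hh : (0 < h)%N) (hF : #|F| = (p ^ h)%N).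

Lemma qR0 : (q%:R : F) = 0.
Proof. by rewrite hF natrX (pcharf0 hc) expr0n; case: h hh. Qed.

Lemma QR : (Q%:R : F) = -1.
Proof. by apply/eqP; rewrite -addr_eq0 natr1 -qE qR0. Qed.

Lemma card_ker m (M : 'M[F]_(n.+1, m)) :
  #|[set v : V | v *m M == 0]| = (q ^ (n.+1 - \rank M))%N.
Proof. by rewrite -mxrank_ker -card_rowg; apply: eq_card => v; rewrite !inE sub_kermx. Qed.

Definition M2 (a b : V) : 'M[F]_(n.+1, 1 + 1) := row_mx a^T b^T.

Lemma M2E (a b v : V) : (v *m M2 a b == 0) = (dot v a == 0) && (dot v b == 0).
Proof. by rewrite /M2 mul_mx_row row_mx_eq0 !mx11_eq0. Qed.

Lemma rank_M2 (a b : V) : \rank (M2 a b) = \rank (col_mx a b).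
Proof. by rewrite /M2 -tr_col_mx mxrank_tr. Qed.

Lemma sum_nz (f : V -> bool) : f 0 ->
  (\sum_(v : V | v != 0%R) (f v : nat) = #|f| - 1)%N.
Proof.
move=> f0; rewrite -sumb_card [in RHS](bigD1 0) //= f0 add1n subSS subn0.
by apply: eq_bigl => v.
Qed.

Lemma inter_one (a b : V) (hn : (2 <= n)%N) :
  (#|hyp_of a :&: hyp_of b|%:R : F) = 1.
Proof.
set S := hyp_of a :&: hyp_of b.
have e : (#|S| * Q)%N =
    (\sum_(v : V | v != 0%R) ((dot v a == 0%R) && (dot v b == 0%R) : nat))%N.
  have -> : #|S| = (\sum_P ((P \in S) : nat))%N.
    by rewrite sumb_card; apply: eq_card.
  rewrite -partitionN; apply: eq_bigr => v v0.
  by rewrite in_setI !inc_ptp.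
rewrite sum_nz /= ?dot0 ?eqxx // in e.
have e2 : #|[pred v : V | (dot v a == 0%R) && (dot v b == 0%R)]| = (q ^ (n.+1 - \rank (M2 a b)))%N.
  by rewrite -card_ker; apply: eq_card => v; rewrite inE M2E.
rewrite e2 in e.
have rk : (\rank (M2 a b) <= 2)%N by apply: rank_leq_col.
have pos : (0 < n.+1 - \rank (M2 a b))%N by lia.
have /(congr1 (fun k : nat => (k%:R : F))) := e.
have qp : (0 < q ^ (n.+1 - \rank (M2 a b)))%N by rewrite expn_gt0 ltnW // q_gt1.
rewrite natrM natrB // natrX QR qR0 expr0n.
rewrite -[(n.+1 - _)%N]prednK //= => /eqP; rewrite mulrN1 sub0r eqr_opp => /eqP.
done.
Qed.

Lemma iota_dotw (A B : {set point F n}) :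
  iota (dotw (incvec p A) (incvec p B)) = #|A :&: B|%:R.
Proof.
have -> : #|A :&: B| = #|[pred P | (P \in A) && (P \in B)]|.
  by apply: eq_card => P; rewrite inE.
rewrite /dotw iota_sum -sumb_card natr_sum; apply: eq_bigr => P _.
rewrite iotaM !ffunE !iota_nat /=.
by case: (P \in A); case: (P \in B); rewrite ?mul1r ?mul0r.
Qed.

Lemma dot_hyp (H H' : hyperplane F n) (hn : (2 <= n)%N) :
  dotw (incvec p (val H)) (incvec p (val H')) = 1.
Proof.
apply: iota_inj; rewrite iota_dotw iota1.
have [a /andP[_ /eqP ->]] := existsP (valP H).
have [b /andP[_ /eqP ->]] := existsP (valP H').
exact: inter_one.
Qed.

Definition uH (H : hyperplane F n) : V := xchoose (existsP (valP H)).
Lemma uH_spec H : uH H != 0 /\ val H = hyp_of (uH H).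
Proof. by have /andP[-> /eqP ->] := xchooseP (existsP (valP H)). Qed.

Lemma dotw_code (d : word p F n) (lam : {ffun hyperplane F n -> 'F_p}) :
  dotw d [ffun P => \sum_H lam H * incvec p (val H) P] =
  \sum_H lam H * dotw d (incvec p (val H)).
Proof.
rewrite /dotw; under eq_bigr do rewrite ffunE mulr_sumr.
rewrite exchange_big; apply: eq_bigr => H _; rewrite mulr_sumr.
by apply: eq_bigr => P _; rewrite mulrCA.
Qed.

Lemma dotwC (c d : word p F n) : dotw c d = dotw d c.
Proof. by apply: eq_bigr => P _; rewrite mulrC. Qed.

Lemma dotwB (x y z : word p F n) : dotw (x - y) z = dotw x z - dotw y z.
Proof. rewrite /dotw -sumrB; apply: eq_bigr => P _; rewrite !ffunE; exact: mulrBl. Qed.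

Lemma sum_delta (H0 : hyperplane F n) (f : hyperplane F n -> 'F_p) :
  \sum_H (H == H0)%:R * f H = f H0.
Proof.
rewrite (bigD1 H0) //= eqxx mul1r big1 ?addr0 // => H /negbTE ->.
by rewrite mul0r.
Qed.

Lemma hyp_scale (a : V) (k : F) : k != 0 -> hyp_of (k *: a) = hyp_of a.
Proof.
move=> k0; apply/setP => P; rewrite !inE /incident; apply: eq_forallb => x.
by rewrite linearZ -scalemxAr scaler_eq0 (negbTE k0).
Qed.

Lemma diff_neq0 (b1 b2 : bool) : ((b1%:R - b2%:R : 'F_p) != 0) = (b1 != b2).
Proof.
by case: b1; case: b2; rewrite /= ?subrr ?eqxx ?subr0 ?sub0r ?oppr_eq0 ?oner_eq0.
Qed.

Lemma sum_nz0 (f : V -> bool) : f 0 = false ->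
  (\sum_(v : V | v != 0%R) (f v : nat) = #|f|)%N.
Proof.
move=> f0; rewrite -sumb_card [in RHS](bigD1 0) //= f0 add0n.
by apply: eq_bigl => v.
Qed.

Lemma card_hyp (a : V) : a != 0 ->
  #|[pred v : V | dot v a == 0]| = (q ^ n)%N.
Proof.
move=> a0; have := card_ker a^T; rewrite mxrank_tr rank_rV a0 subn1 /= => <-.
by apply: eq_card => v; rewrite inE mx11_eq0.
Qed.

Lemma part2 (hn : (2 <= n)%N) (H1 H2 : hyperplane F n) : H1 != H2 ->
  [/\ in_code (incvec p (val H1) - incvec p (val H2)),
      in_dual (incvec p (val H1) - incvec p (val H2)) &
      weight (incvec p (val H1) - incvec p (val H2)) = (2 * q ^ (n - 1))%N].
Proof.
move=> H12; split.
- exists [ffun H => (H == H1)%:R - (H == H2)%:R]; apply/ffunP => P.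
  rewrite !ffunE -[X in X - _](sum_delta H1 (fun H => (P \in val H)%:R)).
  rewrite -[X in _ - X](sum_delta H2 (fun H => (P \in val H)%:R)) -sumrB.
  by apply: eq_bigr => H _; rewrite ?ffunE; apply: esym; apply: mulrBl.
- move=> d [lam ->]; rewrite dotw_code; apply: big1 => H _.
  by rewrite dotwB !dot_hyp // subrr mulr0.
have [a0 Ha] := uH_spec H1; have [b0 Hb] := uH_spec H2.
set a := uH H1 in a0 Ha; set b := uH H2 in b0 Hb.
set c := incvec p (val H1) - incvec p (val H2).
have indep : ~~ (a <= b)%MS.
  apply/negP => /sub_rVP [k ak]; move/negP: H12; apply; apply/eqP/val_inj.
  have k0 : k != 0 by apply: contra a0 => /eqP k0; rewrite ak k0 scale0r.
  by rewrite Ha Hb ak hyp_scale.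
have rk2 : \rank (M2 a b) = 2%N.
  rewrite rank_M2; apply/eqP; rewrite eqn_leq rank_leq_row /=.
  rewrite -addsmxE; apply: leq_trans (rank_ltmx (_ : (b < a + b)%MS)).
    by rewrite rank_rV b0.
  by rewrite ltmxE addsmxSr /= addsmx_sub negb_and indep.
have e1 : (weight c * Q)%N =
    (\sum_(v : V | v != 0%R) ((dot v a == 0%R) != (dot v b == 0%R) : nat))%N.
  have -> : weight c = (\sum_P ((c P != 0%R) : nat))%N.
    by rewrite sumb_card; apply: eq_card => P; rewrite inE.
  rewrite -partitionN; apply: eq_bigr => v v0.
  by rewrite /c !ffunE diff_neq0 Ha Hb !inc_ptp.
rewrite sum_nz0 /= ?dot0 ?eqxx // in e1.
have e2 : (#|[pred v : V | (dot v a == 0%R) != (dot v b == 0%R)]| +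
       2 * #|[pred v : V | (dot v a == 0%R) && (dot v b == 0%R)]| =
       #|[pred v : V | dot v a == 0%R]| + #|[pred v : V | dot v b == 0%R]|)%N.
  rewrite -!sumb_card big_distrr -!big_split; apply: eq_bigr => v _ /=.
  by case: (dot v a == 0); case: (dot v b == 0).
have e3 : #|[pred v : V | (dot v a == 0%R) && (dot v b == 0%R)]| = (q ^ (n - 1))%N.
  rewrite -(subSS 1 n) -rk2 -card_ker; apply: eq_card => v.
  by rewrite inE M2E.
rewrite e3 !card_hyp // -e1 in e2.
have qn : (q ^ n = q * q ^ (n - 1))%N by rewrite -expnS; congr (_ ^ _)%N; lia.
rewrite qn in e2; move: e2; rewrite qE.
set A := (_ ^ (n - 1))%N => e2.
have : (weight c * Q = Q * (2 * A))%N by move: e2; rewrite mulSn; lia.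
rewrite mulnC => /eqP; rewrite eqn_mul2l (negbTE (lt0n_neq0 (Q_gt0 F))) /=.
by move/eqP.
Qed.

Lemma H0_hyp : is_hyp (hyp_of u1).
Proof. by apply/existsP; exists u1; rewrite u1_neq0 eqxx. Qed.
Definition H0 : hyperplane F n := exist _ (hyp_of u1) H0_hyp.

Lemma code_hyp (H1 : hyperplane F n) : in_code (incvec p (val H1)).
Proof.
exists [ffun H => (H == H1)%:R]; apply/ffunP => P; rewrite !ffunE.
rewrite (eq_bigr (fun H => (H == H1)%:R * (P \in val H)%:R)) ?sum_delta //.
by move=> H _; rewrite !ffunE.
Qed.

Lemma part1 (hn : (2 <= n)%N) (c : word p F n) :
  in_code c -> in_dual c -> c != 0 -> (2 * q ^ (n - 1) <= weight c)%N.
Proof.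
move=> [lam ce] dual nz.
have s0 : \sum_H lam H = 0.
  have := dual _ (code_hyp H0); rewrite dotwC ce dotw_code => e.
  by rewrite -[RHS]e; apply: eq_bigr => H _; rewrite dot_hyp // mulr1.
pose mu H := - iota (lam H).
have cv : forall v, v != 0 -> iota (c (ptp v)) = G mu uH v.
  move=> v v0; rewrite ce ffunE iota_sum /G.
  transitivity (\sum_H (iota (lam H) - iota (lam H) * dot v (uH H) ^+ Q)).
    apply: eq_bigr => H _.
    by rewrite iotaM ffunE iota_nat (uH_spec H).2 inc_ptp // ind_pow mulrBr mulr1.
  rewrite sumrB -iota_sum s0 iota0 sub0r -sumrN; apply: eq_bigr => H _.
  by rewrite /mu mulNr.
have cnt : (weight c * Q)%N = #|[set v | G mu uH v != 0]|.
  have -> : weight c = (\sum_P ((c P != 0%R) : nat))%N.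
    by rewrite sumb_card; apply: eq_card => P; rewrite inE.
  rewrite -partitionN.
  have -> : #|[set v | G mu uH v != 0]| = #|[pred v | G mu uH v != 0]|.
    by apply: eq_card => v; rewrite inE.
  rewrite -sum_nz0 /= ?G0 ?eqxx //; apply: eq_bigr => v v0.
  by rewrite -iota_eq0 cv.
have nzG : exists v, G mu uH v != 0.
  have [P cP] : exists P, c P != 0.
    case: (pickP (fun P => c P != 0)) => [P cP | all]; first by exists P.
    by case/eqP: nz; apply/ffunP => P; rewrite ffunE; apply/eqP/negbFE/all.
  have [v v0 Pv] := point_rep P.
  exists v; rewrite -cv // iota_eq0.
  have -> : ptp v = P.
    by apply/eqP; rewrite ptp_eq // Pv; apply/mem_pts; exists 1; rewrite scale1r.
  exact: cP.
have hk : (2 <= n.+1)%N by lia.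
have := core hk nzG; rewrite -cnt.
have -> : (n.+1 - 2 = n - 1)%N by lia.
move=> hcore; rewrite -(leq_pmul2r (Q_gt0 F)).
by rewrite mulnAC.
Qed.

End PG.

End Aux.

Unset Implicit Arguments.

Theorem mainTheorem1 (n p h : nat) (hn : (2 <= n)%N) (hp : prime p) (hh : (0 < h)%N)
    (F : finFieldType) (hF : #|F| = (p ^ h)%N) :
  (forall c : word p F n, in_code c -> in_dual c -> c != 0 ->
      (2 * (p ^ h) ^ (n - 1) <= weight c)%N) /\
  (forall H1 H2 : hyperplane F n, H1 != H2 ->
      [/\ in_code (incvec p (val H1) - incvec p (val H2)),
          in_dual (incvec p (val H1) - incvec p (val H2)) &
          weight (incvec p (val H1) - incvec p (val H2)) = (2 * (p ^ h) ^ (n - 1))%N]).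
Proof.
have hc := card_finPcharP hF hp.
rewrite -hF; split.
- by move=> c; apply: (Aux.part1 hp hc hh hF hn).
- by move=> H1 H2; apply: (Aux.part2 hp hc hh hF hn).
Qed.
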